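(* Let $\mathcal A\in\mathbb R^{n_1}\otimes\cdots\otimes\mathbb R^{n_k}$, $1\le s\le k$ and $r\le\min\{n_1,\dots,n_s\}$. Consider problem (LRPOTA): minimize $\|\mathcal A-(U^{(1)},\dots,U^{(k)})\cdot\mathcal D\|^2$ over $\mathcal D=\operatorname{diag}_k(\lambda_1,\dots,\lambda_r)$, $\lambda_j\in\mathbb R$, $(U^{(i)})^{\mathsf T}U^{(i)}=I_r$ for $i=1,\dots,s$, $U^{(i)}\in\mathrm B(r,n_i)$ for $i=s+1,\dots,k$; and problem (mLRPOTA): maximize $\sum_{j=1}^r\big(((U^{(1)})^{\mathsf T},\dots,(U^{(k)})^{\mathsf T})\cdot\mathcal A\big)_{j\cdots j}^2$ subject to the same constraints on $U=(U^{(1)},\dots,U^{(k)})$. Then: (i) if $(\widehat U,\widehat{\mathcal D})$ with $\widehat{\mathcal D}=\operatorname{diag}_k(\widehat\lambda_1,\dots,\widehat\lambda_r)$ is an optimizer of (LRPOTA), then $\widehat U$ is an optimizer of (mLRPOTA), and the optimal values are respectively $\|\mathcal A\|^2-\sum_j\widehat\lambda_j^2$ and $\sum_j\widehat\lambda_j^2$; (ii) conversely, if $\widehat U$ is an optimizer of (mLRPOTA), then $(\widehat U,\widehat{\mathcal D})$ with $\widehat{\mathcal D}=\operatorname{diag}_k\circ\operatorname{Diag}_k\big(((\widehat U^{(1)})^{\mathsf T},\dots,(\widehat U^{(k)})^{\mathsf T})\cdot\mathcal A\big)$ is an optimizer of (LRPOTA).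
   Context: $\mathrm B(r,n)$ is the set of $n\times r$ real matrices with unit-norm columns. For matrices $B^{(i)}\in\mathbb R^{m_i\times n_i}$ and a tensor $\mathcal A$, $(B^{(1)},\dots,B^{(k)})\cdot\mathcal A$ is the tensor with entries $\sum_{j_1,\dots,j_k}b^{(1)}_{i_1j_1}\cdots b^{(k)}_{i_kj_k}a_{j_1\dots j_k}$. $\operatorname{diag}_k(\lambda)\in(\mathbb R^r)^{\otimes k}$ is the diagonal tensor with diagonal entries $\lambda_1,\dots,\lambda_r$, and $\operatorname{Diag}_k$ extracts the diagonal $(a_{i\cdots i})_{i=1}^r$ of a tensor in $(\mathbb R^r)^{\otimes k}$. The norm is the Hilbert–Schmidt (Frobenius) norm. *)

(* Defs.v *)
From HB Require Import structures.
From mathcomp Require Import all_boot all_order all_algebra.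
From mathcomp Require Import reals.
Set Implicit Arguments. Unset Strict Implicit. Unset Printing Implicit Defensive.
Import Order.TTheory GRing.Theory Num.Theory.
Local Open Scope ring_scope.

Definition midx (k : nat) (n : 'I_k -> nat) := {dffun forall i : 'I_k, 'I_(n i)}.

Definition tensor (R : Type) (k : nat) (n : 'I_k -> nat) := midx n -> R.

Definition cdim (k r : nat) : 'I_k -> nat := fun _ => r.
Arguments cdim : clear implicits.

Definition mlmul (R : realType) (k : nat) (m n : 'I_k -> nat)
  (B : forall i : 'I_k, 'M[R]_(m i, n i)) (A : tensor R n) : tensor R m :=
  fun I => \sum_(J : midx n) (\prod_(i < k) B i (I i) (J i)) * A J.

Definition hsnorm2 (R : realType) (k : nat) (n : 'I_k -> nat) (A : tensor R n) : R :=
  \sum_(J : midx n) (A J) ^+ 2.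

Definition diagk (R : realType) (k r : nat) (lam : 'I_r -> R) : tensor R (cdim k r) :=
  fun I => \sum_(j < r) (if [forall i : 'I_k, (I i : nat) == j] then lam j else 0).

Definition cidx (k r : nat) (j : 'I_r) : midx (cdim k r) :=
  [ffun i : 'I_k => (j : 'I_(cdim k r i))].
Arguments cidx : clear implicits.

Definition Diagk (R : realType) (k r : nat) (A : tensor R (cdim k r)) : 'I_r -> R :=
  fun j => A (cidx k r j).

(* feasible set: U^(i)^T U^(i) = I_r for the first s factors (i < s, 0-based),
   unit-norm columns (U^(i) in B(r, n_i)) for the others *)
Definition feasible (R : realType) (k s r : nat) (n : 'I_k -> nat)
  (U : forall i : 'I_k, 'M[R]_(n i, r)) : Prop :=
  forall i : 'I_k,
    if (i < s)%N then (U i)^T *m U i = 1%:M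
    else forall j : 'I_r, \sum_(l < n i) (U i l j) ^+ 2 = 1.

Definition lrpota_obj (R : realType) (k r : nat) (n : 'I_k -> nat)
  (A : tensor R n) (U : forall i : 'I_k, 'M[R]_(n i, r)) (lam : 'I_r -> R) : R :=
  hsnorm2 (fun I => A I - mlmul (m := n) (n := cdim k r) U (@diagk R k r lam) I).

Definition mlrpota_obj (R : realType) (k r : nat) (n : 'I_k -> nat)
  (A : tensor R n) (U : forall i : 'I_k, 'M[R]_(n i, r)) : R :=
  \sum_(j < r) (mlmul (m := cdim k r) (n := n) (fun i => (U i)^T) A (cidx k r j)) ^+ 2.

Definition lrpota_optimizer (R : realType) (k s r : nat) (n : 'I_k -> nat)
  (A : tensor R n) (U : forall i : 'I_k, 'M[R]_(n i, r)) (lam : 'I_r -> R) : Prop :=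
  feasible s U /\
  forall (V : forall i : 'I_k, 'M[R]_(n i, r)) (mu : 'I_r -> R),
    feasible s V -> lrpota_obj A U lam <= lrpota_obj A V mu.

Definition mlrpota_optimizer (R : realType) (k s r : nat) (n : 'I_k -> nat)
  (A : tensor R n) (U : forall i : 'I_k, 'M[R]_(n i, r)) : Prop :=
  feasible s U /\
  forall V : forall i : 'I_k, 'M[R]_(n i, r),
    feasible s V -> mlrpota_obj A V <= mlrpota_obj A U.

(* Main.v *)
Require Import Defs.
From HB Require Import structures.
From mathcomp Require Import all_boot all_order all_algebra.
From mathcomp Require Import reals ring.
Import Order.TTheory GRing.Theory Num.Theory.
Local Open Scope ring_scope.

Lemma sum_midx_prod (R : realType) k (n : 'I_k -> nat) (g : forall i : 'I_k, 'I_(n i) -> R) :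
  \sum_(J : midx n) \prod_(i < k) g i (J i) = \prod_(i < k) \sum_(l < n i) g i l.
Proof.
rewrite (reindex (@dffun_of_fprod _ (fun i => 'I_(n i)))); last first.
  exact/onW_bij/dffun_of_fprod_bij.
have H := @big_fprod R 0 1 *%R +%R 'I_k (fun i => 'I_(n i)) (fun i => [ffun l => g i l]).

transitivity (\big[+%R/0]_(t : fprod (fun i : 'I_k => 'I_(n i))) \prod_(i in 'I_k) [ffun l => g i l] (t i)).
  apply: eq_bigr => t _; apply: eq_bigr => i _; by rewrite !ffunE.
etransitivity; first exact: H.
transitivity (\prod_(i < k) \sum_(x in tagged_with (fun i : 'I_k => 'I_(n i)) i) untag 0 [ffun l => g i l] x); last first.
  apply: eq_bigr => i _. rewrite -(big_tag (op := +%R) (fun i (l : 'I_(n i)) => [ffun l => g i l] l) i).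
  by apply: eq_bigr => l _; rewrite ffunE.
by rewrite bigA_distr_big_dep.
Qed.

Lemma forall_cidx (k r : nat) (J : midx (cdim k r)) (j : 'I_r) :
  [forall i : 'I_k, (J i : nat) == j] = (J == cidx k r j).
Proof.
apply/forallP/eqP => [H|->] /=.
  apply/ffunP => i; rewrite ffunE; apply/val_inj => /=; exact/eqP/H.
by move=> i; rewrite ffunE.
Qed.

Lemma mlmul_diag (R : realType) (k r : nat) (n : 'I_k -> nat)
  (U : forall i : 'I_k, 'M[R]_(n i, r)) (lam : 'I_r -> R) (I : midx n) :
  mlmul (m := n) (n := cdim k r) U (diagk lam) I =
  \sum_(j < r) lam j * \prod_(i < k) U i (I i) j.
Proof.
rewrite /mlmul /diagk.
under eq_bigr do rewrite mulr_sumr.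
rewrite exchange_big; apply: eq_bigr => j _.
rewrite (bigD1 (cidx k r j)) //= [X in _ + X]big1 => [|J HJ].
  rewrite forall_cidx eqxx addr0 mulrC; congr (_ * _).
  by apply: eq_bigr => i _; rewrite ffunE.
by rewrite forall_cidx (negbTE HJ) mulr0.
Qed.

Lemma c_expand (R : realType) (k r : nat) (n : 'I_k -> nat)
  (U : forall i : 'I_k, 'M[R]_(n i, r)) (A : tensor R n) (j : 'I_r) :
  mlmul (m := cdim k r) (n := n) (fun i => (U i)^T) A (cidx k r j) =
  \sum_(J : midx n) A J * \prod_(i < k) U i (J i) j.
Proof.
rewrite /mlmul; apply: eq_bigr => J _; rewrite mulrC; congr (_ * _).
by apply: eq_bigr => i _; rewrite mxE ffunE.
Qed.

Lemma gram_prod (R : realType) (k s r : nat) (n : 'I_k -> nat)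
  (U : forall i : 'I_k, 'M[R]_(n i, r)) (j j' : 'I_r) :
  (0 < s)%N -> (s <= k)%N -> feasible s U ->
  \prod_(i < k) \sum_(l < n i) U i l j * U i l j' = (j == j')%:R.
Proof.
move=> s0 sk fU.
have k0 : (0 < k)%N by apply: leq_trans sk.
have orth (i : 'I_k) : (i < s)%N -> \sum_(l < n i) U i l j * U i l j' = (j == j')%:R.
  move=> iS; have := fU i; rewrite iS => /(congr1 (fun M : 'M[R]_r => M j j')).
  by rewrite !mxE => <-; apply: eq_bigr => l _; rewrite mxE.
case: (eqVneq j j') => [e|neq]; first subst j'.
  rewrite big1 // => i _.
  have := fU i; case: ifP => iS.
    by move=> _; rewrite orth // eqxx.
  by move=> /(_ j) <-; apply: eq_bigr => l _; rewrite expr2.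
by rewrite (bigD1 (Ordinal k0)) //= orth //= (negbTE neq) mul0r.
Qed.

Lemma sumT2 (R : realType) (k s r : nat) (n : 'I_k -> nat)
  (U : forall i : 'I_k, 'M[R]_(n i, r)) (lam : 'I_r -> R) :
  (0 < s)%N -> (s <= k)%N -> feasible s U ->
  \sum_(I : midx n) (mlmul (m := n) (n := cdim k r) U (diagk lam) I) ^+ 2 =
  \sum_(j < r) lam j ^+ 2.
Proof.
move=> s0 sk fU.
under eq_bigr do rewrite mlmul_diag expr2 mulr_suml.
under eq_bigr do under eq_bigr do rewrite mulr_sumr.
rewrite exchange_big; apply: eq_bigr => j _.
rewrite exchange_big /= (bigD1 j) //= [X in _ + X]big1 => [|j' Hj].
  rewrite addr0 expr2.
  transitivity (\sum_(I : midx n) lam j * lam j * \prod_(i < k) (U i (I i) j * U i (I i) j)).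
    by apply: eq_bigr => I _; rewrite big_split /=; ring.
  by rewrite -mulr_sumr (@sum_midx_prod R k n (fun i l => U i l j * U i l j)) (@gram_prod R k s r n U j j s0 sk fU) eqxx mulr1.
transitivity (\sum_(I : midx n) lam j * lam j' * \prod_(i < k) (U i (I i) j * U i (I i) j')).
  by apply: eq_bigr => I _; rewrite big_split /=; ring.
by rewrite -mulr_sumr (@sum_midx_prod R k n (fun i l => U i l j * U i l j')) (@gram_prod R k s r n U j j' s0 sk fU) eq_sym (negbTE Hj) mulr0.
Qed.

Lemma sumAT (R : realType) (k r : nat) (n : 'I_k -> nat) (A : tensor R n)
  (U : forall i : 'I_k, 'M[R]_(n i, r)) (lam : 'I_r -> R) :
  \sum_(I : midx n) A I * mlmul (m := n) (n := cdim k r) U (diagk lam) I =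
  \sum_(j < r) lam j * mlmul (m := cdim k r) (n := n) (fun i => (U i)^T) A (cidx k r j).
Proof.
under eq_bigr do rewrite mlmul_diag mulr_sumr.
rewrite exchange_big; apply: eq_bigr => j _.
rewrite c_expand mulr_sumr; apply: eq_bigr => I _; ring.
Qed.

Lemma key (R : realType) (k s r : nat) (n : 'I_k -> nat) (A : tensor R n)
  (U : forall i : 'I_k, 'M[R]_(n i, r)) (lam : 'I_r -> R) :
  (0 < s)%N -> (s <= k)%N -> feasible s U ->
  lrpota_obj A U lam = hsnorm2 A - mlrpota_obj A U +
    \sum_(j < r) (lam j - mlmul (m := cdim k r) (n := n) (fun i => (U i)^T) A (cidx k r j)) ^+ 2.
Proof.
move=> s0 sk fU.
set c := fun j => mlmul (m := cdim k r) (n := n) (fun i => (U i)^T) A (cidx k r j).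
set T := mlmul (m := n) (n := cdim k r) U (diagk lam).
have E1 : lrpota_obj A U lam = hsnorm2 A - 2 * \sum_(j < r) lam j * c j + \sum_(j < r) lam j ^+ 2.
  rewrite -(@sumT2 R k s r n U lam s0 sk fU) -(@sumAT R k r n A U lam) /lrpota_obj /hsnorm2 mulr_sumr -sumrB -big_split /=.
  by apply: eq_bigr => I _; rewrite -/T; ring.
have E2 : \sum_(j < r) (lam j - c j) ^+ 2 =
   \sum_(j < r) lam j ^+ 2 - 2 * \sum_(j < r) lam j * c j + \sum_(j < r) c j ^+ 2.
  rewrite mulr_sumr -sumrB -big_split /=.
  by apply: eq_bigr => j _; ring.
rewrite E1 E2 /mlrpota_obj -/c; ring.
Qed.

Theorem proposition3p5 (R : realType) (k s r : nat) (n : 'I_k -> nat)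
  (A : tensor R n) :
  (1 <= s <= k)%N ->
  (forall i : 'I_k, (i < s)%N -> (r <= n i)%N) ->
  (forall (U : forall i : 'I_k, 'M[R]_(n i, r)) (lam : 'I_r -> R),
     lrpota_optimizer s A U lam ->
     [/\ mlrpota_optimizer s A U,
         lrpota_obj A U lam = hsnorm2 A - \sum_(j < r) lam j ^+ 2
       & mlrpota_obj A U = \sum_(j < r) lam j ^+ 2]) /\
  (forall U : forall i : 'I_k, 'M[R]_(n i, r),
     mlrpota_optimizer s A U ->
     lrpota_optimizer s A U
       (Diagk (mlmul (m := cdim k r) (n := n) (fun i => (U i)^T) A))).
Proof.
move=> /andP[s0 sk] _.
set c := fun (V : forall i : 'I_k, 'M[R]_(n i, r)) (j : 'I_r) =>
  mlmul (m := cdim k r) (n := n) (fun i => (V i)^T) A (cidx k r j).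
have keyc V mu : feasible s V -> lrpota_obj A V mu =
    hsnorm2 A - mlrpota_obj A V + \sum_(j < r) (mu j - c V j) ^+ 2.
  by move=> fV; rewrite (@key R k s r n A V mu s0 sk fV).
have keyc0 V : feasible s V -> lrpota_obj A V (c V) = hsnorm2 A - mlrpota_obj A V.
  move=> fV; rewrite keyc // big1 ?addr0 // => j _; by rewrite subrr expr0n.
have sq0 V mu : 0 <= \sum_(j < r) (mu j - c V j) ^+ 2.
  by apply: sumr_ge0 => j _; exact: sqr_ge0.
split.
  move=> U lam [fU opt].
  have h := opt U (c U) fU.
  rewrite keyc0 // keyc // in h.
  have Z : \sum_(j < r) (lam j - c U j) ^+ 2 = 0.
    by apply/eqP; rewrite eq_le sq0 andbT; rewrite -(lerD2l (hsnorm2 A - mlrpota_obj A U)) addr0.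
  have lamE j : lam j = c U j.
    have /eqP := Z; rewrite psumr_eq0 => [/allP H|i _]; last exact: sqr_ge0.
    have := H j (mem_index_enum j); rewrite sqrf_eq0 subr_eq0 => /eqP //.
  have mE : mlrpota_obj A U = \sum_(j < r) lam j ^+ 2.
    by rewrite /mlrpota_obj; apply: eq_bigr => j _; rewrite lamE.
  split => //.
    split => // V fV.
    have := opt V (c V) fV; rewrite keyc0 // keyc // Z addr0.
    by rewrite lerD2l lerN2.
  by rewrite keyc // Z addr0 mE.
move=> U [fU opt]; split => // V mu fV.
have -> : Diagk (mlmul (m := cdim k r) (n := n) (fun i => (U i)^T) A) = c U by [].
rewrite keyc0 // keyc //.
rewrite -[X in X <= _]addr0; apply: lerD; last exact: sq0.
by rewrite lerD2l lerN2; exact: opt.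
Qed.
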